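(* Let $X$ be a complete metric space, let $f:X\to\mathbb{R}\cup\{+\infty\}$ be a proper lower semicontinuous function, let $r_0>0$ and let $k>0$. The following assertions are equivalent: (i) The multivalued mapping $F:X\rightrightarrows\mathbb{R}$, $F(x)=[f(x),+\infty)$, is $k$-metrically regular on $[0<f<r_0]\times(0,r_0)$; (ii) For all $r\in(0,r_0)$ and all $x\in[0<f<r_0]$, $$\operatorname{dist}(x,[f\le r])\le k\,(f(x)-r)^+;$$ (iii) For all $x\in[0<f<r_0]$, $|\nabla f|(x)\ge \frac1k$.
   Context: Notation: $[r_1<f<r_2]=\{x\in X: r_1<f(x)<r_2\}$, $[f\le r]=\{x\in X:f(x)\le r\}$; $a^+=\max\{a,0\}$; $\operatorname{dist}(x,S)=\inf_{y\in S}d(x,y)$ (equal to $+\infty$ if $S=\emptyset$). For a multivalued map $F:X\rightrightarrows Y$ between metric spaces, $\operatorname{Graph}F=\{(x,y):y\in F(x)\}$ and $F^{-1}(y)=\{x:y\in F(x)\}$. $F$ is $k$-metrically regular at $(\bar x,\bar y)\in\operatorname{Graph}F$ if there exist $\varepsilon,\delta>0$ such that $\operatorname{dist}(x,F^{-1}(y))\le k\operatorname{dist}(y,F(x))$ for all $(x,y)\in B(\bar x,\varepsilon)\times B(\bar y,\delta)$; $F$ is $k$-metrically regular on a set $V\subset X\times Y$ if it is $k$-metrically regular at every point of $\operatorname{Graph}F\cap V$. The strong slope of $f$ at $x\in\operatorname{dom}f$ is $|\nabla f|(x)=\limsup_{y\to x}\frac{(f(x)-f(y))^+}{d(x,y)}$.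 $B(x,r)$ is the open ball. *)

(* Defs.v *)
From Stdlib Require Import Reals.
From Coquelicot Require Import Coquelicot.
Open Scope R_scope.

Definition is_metric {X : Type} (d : X -> X -> R) : Prop :=
  (forall x y, 0 <= d x y) /\
  (forall x y, d x y = 0 <-> x = y) /\
  (forall x y, d x y = d y x) /\
  (forall x y z, d x z <= d x y + d y z).

Definition complete_metric {X : Type} (d : X -> X -> R) : Prop :=
  forall u : nat -> X,
    (forall eps, 0 < eps -> exists N, forall m n, (N <= m)%nat -> (N <= n)%nat -> d (u m) (u n) < eps) ->
    exists l, forall eps, 0 < eps -> exists N, forall n, (N <= n)%nat -> d (u n) l < eps.

(* f : X -> R ∪ {+oo} proper: never -oo, not identically +oo *)
Definition proper_fun {X : Type} (f : X -> Rbar) : Prop :=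
  (forall x, f x <> m_infty) /\ (exists x, is_finite (f x)).

Definition lsc {X : Type} (d : X -> X -> R) (f : X -> Rbar) : Prop :=
  forall x (a : R), Rbar_lt a (f x) ->
    exists eps, 0 < eps /\ forall y, d x y < eps -> Rbar_lt a (f y).

(* dist(x,S) = inf_{y in S} d(x,y), = +oo if S empty *)
Definition distS {X : Type} (d : X -> X -> R) (x : X) (S : X -> Prop) : Rbar :=
  Rbar_glb (fun t => exists y, S y /\ t = Finite (d x y)).

Definition dR (a b : R) : R := Rabs (a - b).

Definition metrically_regular_at {X Y : Type} (dX : X -> X -> R) (dY : Y -> Y -> R)
  (F : X -> Y -> Prop) (k : R) (xb : X) (yb : Y) : Prop :=
  exists eps delta, 0 < eps /\ 0 < delta /\
    forall x y, dX x xb < eps -> dY y yb < delta ->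
      Rbar_le (distS dX x (fun x' => F x' y)) (Rbar_mult k (distS dY y (F x))).

Definition metrically_regular_on {X Y : Type} (dX : X -> X -> R) (dY : Y -> Y -> R)
  (F : X -> Y -> Prop) (k : R) (V : X -> Y -> Prop) : Prop :=
  forall x y, F x y -> V x y -> metrically_regular_at dX dY F k x y.

(* the epigraphical multifunction F(x) = [f(x), +oo) (empty if f x = +oo) *)
Definition epi_map {X : Type} (f : X -> Rbar) : X -> R -> Prop :=
  fun x y => Rbar_le (f x) y.

Definition strict_level {X : Type} (f : X -> Rbar) (a b : R) : X -> Prop :=
  fun x => Rbar_lt a (f x) /\ Rbar_lt (f x) b.

Definition sublevel {X : Type} (f : X -> Rbar) (r : R) : X -> Prop :=
  fun x => Rbar_le (f x) r.

Definition slope_quot {X : Type} (d : X -> X -> R) (f : X -> Rbar) (x y : X) : R :=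
  match f y with
  | Finite fy => Rmax (real (f x) - fy) 0 / d x y
  | _ => 0
  end.

(* strong slope |∇f|(x) = limsup_{y -> x} (f x - f y)^+ / d(x,y)
   = inf_{delta>0} sup_{0<d(x,y)<delta} quotient  (0 at isolated points) *)
Definition strong_slope {X : Type} (d : X -> X -> R) (f : X -> Rbar) (x : X) : Rbar :=
  Rbar_glb (fun s => exists delta, 0 < delta /\
    s = Rbar_lub (fun t => t = Finite 0 \/
          exists y, 0 < d x y < delta /\ t = Finite (slope_quot d f x y))).

(* Main.v *)
Require Import Defs.
From Stdlib Require Import Reals.
From Coquelicot Require Import Coquelicot.
From Stdlib Require Import Lra Lia Classical ClassicalEpsilon.
Open Scope R_scope.

Lemma glb_spec (E : Rbar -> Prop) : Rbar_is_glb E (Rbar_glb E).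
Proof. unfold Rbar_glb. destruct (Rbar_ex_glb E) as [l Hl]. exact Hl. Qed.
Lemma lub_spec (E : Rbar -> Prop) : Rbar_is_lub E (Rbar_lub E).
Proof. unfold Rbar_lub. destruct (Rbar_ex_lub E) as [l Hl]. exact Hl. Qed.

Lemma glb_le E a : E a -> Rbar_le (Rbar_glb E) a.
Proof. intros H. apply (proj1 (glb_spec E)). exact H. Qed.
Lemma glb_ge E b : (forall a, E a -> Rbar_le b a) -> Rbar_le b (Rbar_glb E).
Proof. intros H. apply (proj2 (glb_spec E)). exact H. Qed.
Lemma glb_lt E b : Rbar_lt (Rbar_glb E) b -> exists a, E a /\ Rbar_lt a b.
Proof.
  intros H. apply NNPP. intros Hn. apply (Rbar_lt_not_le _ _ H).
  apply glb_ge. intros a Ea. apply Rbar_not_lt_le. intros Hab. apply Hn. eauto.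
Qed.
Lemma lub_ge E a : E a -> Rbar_le a (Rbar_lub E).
Proof. intros H. apply (proj1 (lub_spec E)). exact H. Qed.
Lemma lub_le E b : (forall a, E a -> Rbar_le a b) -> Rbar_le (Rbar_lub E) b.
Proof. intros H. apply (proj2 (lub_spec E)). exact H. Qed.

Section D.
Context {X : Type} (d : X -> X -> R).
Lemma dist_le x (S : X -> Prop) y : S y -> Rbar_le (distS d x S) (d x y).
Proof. intros H. apply glb_le. eauto. Qed.
Lemma dist_ge x (S : X -> Prop) c : (forall y, S y -> c <= d x y) -> Rbar_le c (distS d x S).
Proof. intros H. apply glb_ge. intros a [y [Sy ->]]. simpl. auto. Qed.
Lemma dist_lt x (S : X -> Prop) (b : R) : Rbar_lt (distS d x S) b -> exists y, S y /\ d x y < b.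
Proof. intros H. destruct (glb_lt _ _ H) as [a [[y [Sy ->]] Hl]]. simpl in Hl. eauto. Qed.
End D.

Lemma Rbar_le_eps (D : Rbar) (A : R) : (forall e, 0 < e -> Rbar_le D (A + e)) -> Rbar_le D A.
Proof.
  intros H. destruct D as [D| |]; simpl.
  - apply Rnot_lt_le. intros Hlt. specialize (H ((D - A)/2) ltac:(lra)). simpl in H. lra.
  - apply (H 1). lra.
  - auto.
Qed.

Lemma Rle_eps (D A : R) : (forall e, 0 < e -> D <= A + e) -> D <= A.
Proof. intros H. apply Rnot_lt_le. intros Hlt. specialize (H ((D - A)/2) ltac:(lra)). lra. Qed.

Section Ek.
Variables (X : Type) (d : X -> X -> R) (f : X -> Rbar) (r lam : R).
Hypothesis Hm : is_metric d.
Hypothesis Hc : complete_metric d.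
Hypothesis Hf : forall x, f x <> m_infty.
Hypothesis Hl : lsc d f.
Hypothesis Hlam : 0 < lam.

Definition gr w := Rmax (real (f w)) r.
Definition SS z w := Rbar_le (f w) (gr z - lam * d z w) /\ r <= gr z - lam * d z w.

Lemma d_pos x y : 0 <= d x y. Proof. apply Hm. Qed.
Lemma d_sym x y : d x y = d y x. Proof. apply Hm. Qed.
Lemma d_tri x y z : d x z <= d x y + d y z. Proof. apply Hm. Qed.
Lemma d_refl x : d x x = 0. Proof. apply Hm. reflexivity. Qed.

Lemma SS_fin z w : SS z w -> f w = Finite (real (f w)).
Proof.
  intros [H1 _]. generalize (Hf w). destruct (f w); simpl in *; tauto.
Qed.

Lemma SS_gr z w : SS z w -> gr w <= gr z - lam * d z w.
Proof.
  intros H. pose proof (SS_fin _ _ H) as E. destruct H as [H1 H2].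
  unfold gr at 1. rewrite E in H1. simpl in H1. apply Rmax_lub; lra.
Qed.

Lemma SS_refl z w : SS z w -> SS w w.
Proof.
  intros H. pose proof (SS_fin _ _ H) as E. split; rewrite d_refl, Rmult_0_r, Rminus_0_r.
  - rewrite E. simpl. unfold gr. rewrite E. simpl. apply Rmax_l.
  - apply Rmax_r.
Qed.

Lemma SS_trans y z w : SS y z -> SS z w -> SS y w.
Proof.
  intros H1 H2. pose proof (SS_gr _ _ H1) as G. destruct H2 as [A B].
  pose proof (d_tri y z w).
  assert (Hk : gr z - lam * d z w <= gr y - lam * d y w) by nra.
  split.
  - eapply Rbar_le_trans; [exact A|]. simpl. exact Hk.
  - lra.
Qed.

Lemma near_min z e : SS z z -> 0 < e ->
  exists w, SS z w /\ forall v, SS z v -> gr w <= gr v + e.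
Proof.
  intros Hz He. apply NNPP. intros Hn.
  assert (Hall : forall w, SS z w -> exists v, SS z v /\ gr v < gr w - e).
  { intros w Hw. apply NNPP. intros Hv. apply Hn. exists w. split; auto.
    intros v Sv. apply Rnot_lt_le. intros Hlt. apply Hv. exists v. split; auto. lra. }
  assert (Hind : forall n, exists w, SS z w /\ gr w <= gr z - INR n * e).
  { induction n as [|n IH].
    - exists z. split; auto. simpl. lra.
    - destruct IH as [w [Sw Gw]]. destruct (Hall w Sw) as [v [Sv Gv]].
      exists v. split; auto. rewrite S_INR. lra. }
  destruct (archimed_cor1 (e / (gr z - r + 1))) as [N [HN HN0]].
  { apply Rdiv_lt_0_compat; auto. unfold gr. pose proof (Rmax_r (real (f z)) r). lra. }
  destruct (Hind N) as [w [Sw Gw]].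
  pose proof (Rmax_r (real (f w)) r). fold (gr w) in H.
  assert (HNp : 0 < INR N) by (apply lt_0_INR; lia).
  assert (Hq : 0 < gr z - r + 1) by (unfold gr; pose proof (Rmax_r (real (f z)) r); lra).
  assert (e / (gr z - r + 1) * INR N > 1).
  { apply Rmult_lt_reg_r with (/ INR N). apply Rinv_0_lt_compat; auto.
    rewrite Rmult_assoc, Rinv_r, Rmult_1_r, Rmult_1_l by lra. lra. }
  assert (e * INR N > gr z - r + 1).
  { unfold Rdiv in H0. apply Rmult_lt_reg_r with (/ (gr z - r + 1)).
    apply Rinv_0_lt_compat; auto. rewrite Rinv_r by lra. lra. }
  lra.
Qed.

Lemma step_ex (n : nat) (z : X) : exists w, SS z z ->
  (SS z w /\ forall v, SS z v -> gr w <= gr v + / INR (S n)).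
Proof.
  destruct (classic (SS z z)) as [H|H].
  - destruct (near_min z (/ INR (S n)) H) as [w Hw].
    { apply Rinv_0_lt_compat. apply lt_0_INR. lia. }
    exists w. auto.
  - exists z. tauto.
Qed.

Definition nxt n z := proj1_sig (constructive_indefinite_description _ (step_ex n z)).
Fixpoint useq (x0 : X) (n : nat) : X :=
  match n with O => x0 | S n => nxt n (useq x0 n) end.

Lemma small_inv c : 0 < c -> exists N, / INR (S N) < c.
Proof.
  intros Hc0. destruct (archimed_cor1 c Hc0) as [N [HN HN0]]. exists N.
  eapply Rle_lt_trans; [|exact HN]. apply Rinv_le_contravar.
  apply lt_0_INR; lia. rewrite S_INR; lra.
Qed.

Lemma ekeland x0 : SS x0 x0 -> exists z, SS x0 z /\ forall w, SS z w -> w = z.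
Proof.
  intros H0. set (u := useq x0).
  assert (Hstep : forall n, SS (u n) (u n) -> SS (u n) (u (S n)) /\
             forall v, SS (u n) v -> gr (u (S n)) <= gr v + / INR (S n)).
  { intros n. exact (proj2_sig (constructive_indefinite_description _ (step_ex n (u n)))). }
  assert (Hinv : forall n, SS (u n) (u n)).
  { induction n as [|n IH]. exact H0. apply (SS_refl (u n)). apply Hstep; auto. }
  assert (Hmono : forall n m, (n <= m)%nat -> SS (u n) (u m)).
  { intros n m Hnm. induction Hnm. apply Hinv.
    apply SS_trans with (u m); auto. apply Hstep; auto. }
  assert (Hkey : forall n v, SS (u (S n)) v -> lam * d (u (S n)) v <= / INR (S n)).
  { intros n v Hv. destruct (Hstep n (Hinv n)) as [A B].
    pose proof (B v (SS_trans _ _ _ A Hv)). pose proof (SS_gr _ _ Hv). lra. }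
  assert (Hcauchy : forall eps, 0 < eps -> exists N, forall m n, (N <= m)%nat -> (N <= n)%nat -> d (u m) (u n) < eps).
  { intros eps He. destruct (small_inv (eps * lam / 2)) as [N HN].
    { apply Rmult_lt_0_compat. nra. lra. }
    exists (S N). intros m n Hm1 Hn1.
    pose proof (Hkey N _ (Hmono _ _ Hm1)) as K1. pose proof (Hkey N _ (Hmono _ _ Hn1)) as K2.
    pose proof (d_tri (u m) (u (S N)) (u n)) as T. rewrite (d_sym (u m) (u (S N))) in T.
    assert (lam * d (u m) (u n) <= lam * d (u (S N)) (u m) + lam * d (u (S N)) (u n))
      by (rewrite <- Rmult_plus_distr_l; apply Rmult_le_compat_l; lra).
    assert (lam * d (u m) (u n) < lam * eps) by (rewrite (Rmult_comm lam eps); lra).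
    apply Rmult_lt_reg_l with lam; auto. }
  destruct (Hc u Hcauchy) as [z Hz].
  assert (Hcl : forall n, SS (u n) z).
  { intros n. set (c := gr (u n) - lam * d (u n) z).
    assert (Hm2 : forall m, (n <= m)%nat -> Rbar_le (f (u m)) (c + lam * d z (u m)) /\ r <= c + lam * d z (u m)).
    { intros m Hnm. destruct (Hmono _ _ Hnm) as [A B].
      pose proof (d_tri (u n) (u m) z) as T. rewrite (d_sym (u m) z) in T.
      assert (lam * d (u n) z <= lam * d (u n) (u m) + lam * d z (u m))
        by (rewrite <- Rmult_plus_distr_l; apply Rmult_le_compat_l; lra).
      assert (gr (u n) - lam * d (u n) (u m) <= c + lam * d z (u m)) by (unfold c; lra).
      split; [eapply Rbar_le_trans; [exact A|]; simpl|]; lra. }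
    assert (Hnear : forall e, 0 < e -> exists m, (n <= m)%nat /\ d z (u m) < e).
    { intros e He. destruct (Hz e He) as [N HN]. exists (max n N). split. lia.
      rewrite d_sym. apply HN. lia. }
    split.
    - fold c. apply Rbar_not_lt_le. intros Hlt.
      assert (Heta : exists eta, 0 < eta /\ Rbar_lt (c + eta) (f z)).
      { destruct (f z) as [fz| |]; simpl in Hlt |- *.
        - exists ((fz - c)/2). split; lra.
        - exists 1. split; [lra|auto].
        - contradiction. }
      destruct Heta as [eta [Heta Hlt2]].
      destruct (Hl z (c + eta) Hlt2) as [e0 [He0 Hy]].
      destruct (Hnear (Rmin e0 (eta / lam))) as [m [Hnm Hdm]].
      { apply Rmin_pos; auto. apply Rdiv_lt_0_compat; auto. }
      pose proof (Hy (u m) (Rlt_le_trans _ _ _ Hdm (Rmin_l _ _))).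
      assert (d z (u m) < eta / lam) by (eapply Rlt_le_trans; [exact Hdm| apply Rmin_r]).
      assert (lam * d z (u m) < eta).
      { apply Rmult_lt_compat_l with (r := lam) in H1; auto.
        unfold Rdiv in H1. rewrite <- Rmult_assoc, (Rmult_comm lam eta), Rmult_assoc, Rinv_r, Rmult_1_r in H1; lra. }
      destruct (Hm2 m Hnm) as [A _].
      destruct (f (u m)) as [fm| |]; simpl in A, H; lra.
    - fold c. apply Rle_eps. intros e He.
      destruct (Hnear (e / lam)) as [m [Hnm Hdm]]. apply Rdiv_lt_0_compat; auto.
      destruct (Hm2 m Hnm) as [_ B].
      assert (lam * d z (u m) < e).
      { apply Rmult_lt_compat_l with (r := lam) in Hdm; auto.
        unfold Rdiv in Hdm. rewrite <- Rmult_assoc, (Rmult_comm lam e), Rmult_assoc, Rinv_r, Rmult_1_r in Hdm; lra. }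
      lra. }
  exists z. split. exact (Hcl O).
  intros w Hw.
  assert (Hd : d z w <= 0).
  { apply Rle_eps. intros e He. rewrite Rplus_0_l.
    destruct (small_inv (e * lam / 2)) as [N HN].
    { apply Rmult_lt_0_compat. nra. lra. }
    pose proof (Hkey N _ (Hcl (S N))) as K1. pose proof (Hkey N _ (SS_trans _ _ _ (Hcl (S N)) Hw)) as K2.
    pose proof (d_tri z (u (S N)) w) as T. rewrite (d_sym z (u (S N))) in T.
    assert (lam * d z w <= lam * d (u (S N)) z + lam * d (u (S N)) w)
      by (rewrite <- Rmult_plus_distr_l; apply Rmult_le_compat_l; lra).
    assert (lam * d z w < lam * e) by (rewrite (Rmult_comm lam e); lra).
    apply Rlt_le. apply Rmult_lt_reg_l with lam; auto. }
  symmetry. apply Hm. pose proof (d_pos z w). lra.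
Qed.
End Ek.

Lemma Rbar_le_eps_lo (A : R) (L : Rbar) : (forall e, 0 < e -> Rbar_le (A - e) L) -> Rbar_le A L.
Proof.
  intros H. destruct L as [L| |]; simpl.
  - apply Rnot_lt_le. intros Hlt. specialize (H ((A - L)/2) ltac:(lra)). simpl in H. lra.
  - auto.
  - apply (H 1). lra.
Qed.

Lemma mult_pinf k : 0 < k -> Rbar_mult (Finite k) p_infty = p_infty.
Proof.
  intros Hk. unfold Rbar_mult, Rbar_mult'.
  destruct (Rle_dec 0 k); [|lra]. destruct (Rle_lt_or_eq_dec 0 k r); [reflexivity|lra].
Qed.

Lemma dist_epi (X : Type) (f : X -> Rbar) x b y : f x = Finite b ->
  distS dR y (epi_map f x) = Finite (Rmax (b - y) 0).
Proof.
  intros E. apply Rbar_le_antisym.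
  - eapply Rbar_le_trans. apply dist_le with (y := Rmax b y).
    unfold epi_map. rewrite E. simpl. apply Rmax_l.
    simpl. unfold dR. unfold Rmax. destruct (Rle_dec b y); destruct (Rle_dec (b - y) 0); 
      try (rewrite Rminus_diag, Rabs_R0); try lra.
    rewrite Rabs_minus_sym, Rabs_right; lra.
  - apply dist_ge. intros y' H. unfold epi_map in H. rewrite E in H. simpl in H.
    unfold dR. apply Rmax_lub. rewrite Rabs_minus_sym. eapply Rle_trans; [|apply Rle_abs]. lra.
    apply Rabs_pos.
Qed.

Lemma dist_shift (X : Type) (d : X -> X -> R) (S : X -> Prop) x xb (B : R) : is_metric d ->
  Rbar_le (distS d xb S) B -> Rbar_le (distS d x S) (d x xb + B).
Proof.
  intros Hm H. apply Rbar_le_eps. intros e He.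
  assert (Rbar_lt (distS d xb S) (B + e)).
  { eapply Rbar_le_lt_trans. exact H. simpl. lra. }
  destruct (dist_lt _ _ _ _ H0) as [y [Sy Hy]].
  eapply Rbar_le_trans. apply dist_le. exact Sy. simpl.
  destruct Hm as [_ [_ [_ T]]]. pose proof (T x xb y). lra.
Qed.

Lemma slope_local (X : Type) (d : X -> X -> R) (f : X -> Rbar) (k : R) x a :
  is_metric d -> (forall x, f x <> m_infty) -> 0 < k -> f x = Finite a ->
  (exists delta, 0 < delta /\ forall h, 0 < h < delta ->
     Rbar_le (distS d x (sublevel f (a - h))) (k * h)) ->
  Rbar_le (/ k) (strong_slope d f x).
Proof.
  intros Hm Hf Hk E [delta [Hdel Hloc]].
  unfold strong_slope. apply glb_ge. intros s [dl [Hdl ->]].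
  apply Rbar_le_eps_lo. intros e He. set (t := / k - e).
  destruct (Rle_dec t 0) as [Ht|Ht].
  { eapply Rbar_le_trans; [|apply lub_ge; left; reflexivity]. simpl. fold t. lra. }
  assert (Ht0 : 0 < t) by lra.
  assert (Hkt : k * t < 1).
  { unfold t. rewrite Rmult_minus_distr_l, Rinv_r by lra. nra. }
  set (h := Rmin (delta / 2) (dl * t)).
  assert (Hh0 : 0 < h) by (apply Rmin_pos; nra).
  assert (Hh1 : h < delta) by (unfold h; pose proof (Rmin_l (delta/2) (dl*t)); lra).
  assert (Hh2 : h <= dl * t) by apply Rmin_r.
  pose proof (Hloc h (conj Hh0 Hh1)) as Hd.
  assert (Hkh : k * h < h / t).
  { apply Rmult_lt_reg_r with t; auto. replace (h / t * t) with h by (field; lra). nra. }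
  destruct (dist_lt d x (sublevel f (a - h)) (h / t)) as [y [Sy Dy]].
  { eapply Rbar_le_lt_trans. exact Hd. simpl. exact Hkh. }
  unfold sublevel in Sy.
  assert (Ey : f y = Finite (real (f y))).
  { generalize (Hf y). destruct (f y); simpl in *; tauto. }
  rewrite Ey in Sy. simpl in Sy.
  assert (Dpos : 0 < d x y).
  { destruct Hm as [P [Q _]]. destruct (Rle_lt_or_eq_dec 0 (d x y) (P x y)) as [|Z]; auto.
    symmetry in Z. apply Q in Z. subst y. rewrite E in Sy. simpl in Sy. lra. }
  assert (Htd : t * d x y < h).
  { apply Rmult_lt_compat_l with (r := t) in Dy; auto. unfold Rdiv in Dy.
    rewrite (Rmult_comm h), <- Rmult_assoc, Rinv_r, Rmult_1_l in Dy; lra. }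
  eapply Rbar_le_trans; [|apply lub_ge; right; exists y; split; [split; [exact Dpos|]|reflexivity]].
  2: { apply Rmult_lt_reg_l with t; auto. nra. }
  unfold slope_quot. rewrite Ey, E. simpl. fold t.
  apply Rmult_le_reg_r with (d x y); auto. unfold Rdiv.
  rewrite Rmult_assoc, Rinv_l, Rmult_1_r by lra.
  pose proof (Rmax_l (a - real (f y)) 0). lra.
Qed.

Lemma fin_of (X : Type) (f : X -> Rbar) y : f y <> m_infty -> forall c : R, Rbar_le (f y) c ->
  f y = Finite (real (f y)).
Proof. intros H c Hc. destruct (f y); simpl in *; tauto. Qed.

Lemma iii_ii (X : Type) (d : X -> X -> R) (f : X -> Rbar) (r0 k : R) :
  is_metric d -> complete_metric d -> (forall x, f x <> m_infty) -> lsc d f -> 0 < k ->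
  (forall x, strict_level f 0 r0 x -> Rbar_le (/ k) (strong_slope d f x)) ->
  forall r x, 0 < r < r0 -> strict_level f 0 r0 x ->
       Rbar_le (distS d x (sublevel f r)) (k * Rmax (real (f x) - r) 0).
Proof.
  intros Hm Hc Hf Hl Hk H3 r x Hr Hx.
  assert (Ex : f x = Finite (real (f x))).
  { destruct Hx as [A B]. destruct (f x); simpl in *; tauto. }
  set (a := real (f x)) in *.
  assert (Hxa : 0 < a < r0) by (destruct Hx as [A B]; rewrite Ex in A, B; simpl in *; lra).
  destruct (Rle_dec a r) as [Har|Har].
  { eapply Rbar_le_trans. apply dist_le with (y := x). unfold sublevel. rewrite Ex. simpl. lra.
    destruct Hm as [_ [Q _]]. rewrite (proj2 (Q x x) eq_refl). simpl.
    apply Rmult_le_pos; [lra|apply Rmax_r]. }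
  rewrite Rmax_left by lra.
  apply Rbar_le_eps. intros e He.
  set (k' := k + e / (a - r)).
  assert (Hk' : k < k') by (unfold k'; assert (0 < e / (a - r)) by (apply Rdiv_lt_0_compat; lra); lra).
  set (lam := / k').
  assert (Hlam : 0 < lam) by (apply Rinv_0_lt_compat; lra).
  assert (Sxx : SS X d f r lam x x).
  { unfold SS, gr. destruct Hm as [_ [Q _]]. rewrite (proj2 (Q x x) eq_refl).
    rewrite Rmult_0_r, Rminus_0_r. fold a. rewrite Rmax_left by lra. rewrite Ex. simpl. lra. }
  destruct (ekeland X d f r lam Hm Hc Hf Hl Hlam x Sxx) as [z [Sz Uz]].
  destruct Sz as [Sz1 Sz2]. unfold gr in Sz1, Sz2. fold a in Sz1, Sz2.
  rewrite Rmax_left in Sz1, Sz2 by lra.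
  assert (Hdk : d x z <= k * (a - r) + e).
  { assert (d x z <= (a - r) * k').
    { apply Rmult_le_reg_l with lam; auto. replace (lam * ((a - r) * k')) with (a - r).
      lra. unfold lam. field. lra. }
    unfold k' in H. replace (k * (a - r) + e) with ((a - r) * (k + e / (a - r))) by (field; lra). lra. }
  destruct (classic (Rbar_le (f z) r)) as [Hz|Hz].
  { eapply Rbar_le_trans. apply dist_le with (y := z). exact Hz. simpl. exact Hdk. }
  exfalso. apply Rbar_not_le_lt in Hz.
  pose proof (fin_of X f z (Hf z) _ Sz1) as Ez. set (b := real (f z)) in *.
  rewrite Ez in Hz, Sz1. simpl in Hz, Sz1.
  assert (Hdz : 0 <= d x z) by apply Hm.
  assert (Hlz : 0 <= lam * d x z) by (apply Rmult_le_pos; lra).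
  assert (Sz : strict_level f 0 r0 z) by (split; rewrite Ez; simpl; lra).
  specialize (H3 z Sz).
  destruct (Hl z r) as [e0 [He0 Hne]]. rewrite Ez; simpl; lra.
  assert (Hsl : Rbar_le (strong_slope d f z) lam).
  { unfold strong_slope. eapply Rbar_le_trans. apply glb_le. exists e0. split. exact He0. reflexivity.
    apply lub_le. intros t [->|[y [[Dy1 Dy2] ->]]]. simpl. lra.
    unfold slope_quot. specialize (Hne y Dy2).
    destruct (f y) as [c| |] eqn:Ey; simpl; [|lra|lra].
    simpl in Hne. rewrite Ez. simpl. fold b.
    assert (NS : ~ SS X d f r lam z y).
    { intros HS. apply Uz in HS. subst y. destruct Hm as [_ [Q _]]. rewrite (proj2 (Q z z) eq_refl) in Dy1. lra. }
    unfold SS, gr in NS. rewrite Ez in NS. simpl in NS. fold b in NS. rewrite Rmax_left in NS by lra.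
    rewrite Ey in NS. simpl in NS.
    assert (Hbc : b - c < lam * d z y).
    { destruct (Rlt_dec (b - c) (lam * d z y)); auto. exfalso. apply NS. split; lra. }
    assert (0 < lam * d z y) by (apply Rmult_lt_0_compat; lra).
    apply Rmult_le_reg_r with (d z y); auto. unfold Rdiv.
    rewrite Rmult_assoc, Rinv_l, Rmult_1_r by lra. apply Rmax_lub; lra. }
  pose proof (Rbar_le_trans _ _ _ H3 Hsl). simpl in H.
  unfold lam in H. assert (/ k' < / k) by (apply Rinv_lt_contravar; nra). lra.
Qed.

Lemma ii_iii (X : Type) (d : X -> X -> R) (f : X -> Rbar) (r0 k : R) :
  is_metric d -> (forall x, f x <> m_infty) -> 0 < k ->
  (forall r x, 0 < r < r0 -> strict_level f 0 r0 x ->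
       Rbar_le (distS d x (sublevel f r)) (k * Rmax (real (f x) - r) 0)) ->
  forall x, strict_level f 0 r0 x -> Rbar_le (/ k) (strong_slope d f x).
Proof.
  intros Hm Hf Hk H2 x Hx.
  assert (Ex : f x = Finite (real (f x))).
  { destruct Hx as [A B]. destruct (f x); simpl in *; tauto. }
  set (a := real (f x)) in *.
  assert (Hxa : 0 < a < r0) by (destruct Hx as [A B]; rewrite Ex in A, B; simpl in *; lra).
  apply (slope_local X d f k x a Hm Hf Hk Ex).
  exists a. split. lra. intros h Hh.
  pose proof (H2 (a - h) x ltac:(lra) Hx). fold a in H.
  replace (a - (a - h)) with h in H by ring. rewrite Rmax_left in H by lra. exact H.
Qed.

Lemma i_iii (X : Type) (d : X -> X -> R) (f : X -> Rbar) (r0 k : R) :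
  is_metric d -> (forall x, f x <> m_infty) -> 0 < k ->
  metrically_regular_on d dR (epi_map f) k
       (fun x y => strict_level f 0 r0 x /\ 0 < y < r0) ->
  forall x, strict_level f 0 r0 x -> Rbar_le (/ k) (strong_slope d f x).
Proof.
  intros Hm Hf Hk H1 x Hx.
  assert (Ex : f x = Finite (real (f x))).
  { destruct Hx as [A B]. destruct (f x); simpl in *; tauto. }
  set (a := real (f x)) in *.
  assert (Hxa : 0 < a < r0) by (destruct Hx as [A B]; rewrite Ex in A, B; simpl in *; lra).
  apply (slope_local X d f k x a Hm Hf Hk Ex).
  destruct (H1 x a) as [eps [delta [He [Hd Hreg]]]].
  { unfold epi_map. rewrite Ex. simpl. lra. }
  { split; auto. }
  exists delta. split; auto. intros h Hh.
  assert (dxx : d x x = 0) by (destruct Hm as [_ [Q _]]; apply Q; reflexivity).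
  pose proof (Hreg x (a - h) ltac:(lra)) as R.
  rewrite (dist_epi X f x a (a - h) Ex) in R.
  replace (a - (a - h)) with h in R by ring. rewrite Rmax_left in R by lra.
  apply R. unfold dR. replace (a - h - a) with (- h) by ring. rewrite Rabs_Ropp, Rabs_right; lra.
Qed.

Lemma ii_i (X : Type) (d : X -> X -> R) (f : X -> Rbar) (r0 k : R) :
  is_metric d -> (forall x, f x <> m_infty) -> 0 < k -> 0 < r0 ->
  (forall r x, 0 < r < r0 -> strict_level f 0 r0 x ->
       Rbar_le (distS d x (sublevel f r)) (k * Rmax (real (f x) - r) 0)) ->
  metrically_regular_on d dR (epi_map f) k
       (fun x y => strict_level f 0 r0 x /\ 0 < y < r0).
Proof.
  intros Hm Hf Hk Hr0 H2 xb yb HF [Hxb Hyb].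
  assert (Exb : f xb = Finite (real (f xb))).
  { destruct Hxb as [A B]. destruct (f xb); simpl in *; tauto. }
  set (a := real (f xb)) in *.
  unfold epi_map in HF. rewrite Exb in HF. simpl in HF.
  set (delta := Rmin yb (r0 - yb) / 4).
  assert (Hd1 : 0 < delta) by (unfold delta; apply Rdiv_lt_0_compat; [apply Rmin_pos|]; lra).
  assert (Hd2 : 4 * delta <= yb) by (unfold delta; pose proof (Rmin_l yb (r0 - yb)); lra).
  assert (Hd3 : 4 * delta <= r0 - yb) by (unfold delta; pose proof (Rmin_r yb (r0 - yb)); lra).
  exists (k * delta), delta. split. nra. split. auto.
  intros x y Hx Hy. unfold dR in Hy. apply Rabs_def2 in Hy. destruct Hy as [Hy1 Hy2].
  assert (Hy : 0 < y < r0) by lra.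
  pose proof (Hf x) as Hfx. destruct (f x) as [b| |] eqn:Ex.
  2: { unfold distS at 2. replace (Rbar_glb _) with p_infty.
       rewrite mult_pinf by lra. destruct (distS d x _); simpl; auto.
       apply Rbar_le_antisym. apply glb_ge. intros t [y' [Hy' _]]. unfold epi_map in Hy'.
       rewrite Ex in Hy'. simpl in Hy'. contradiction. destruct (Rbar_glb _); simpl; auto. }
  2: { exfalso; apply Hfx; reflexivity. }
  rewrite (dist_epi X f x b y Ex). simpl.
  destruct (Rle_dec b y) as [Hby|Hby].
  { eapply Rbar_le_trans. apply dist_le with (y := x). change (Rbar_le (f x) y). rewrite Ex. simpl. exact Hby.
    destruct Hm as [_ [Q _]]. rewrite (proj2 (Q x x) eq_refl). simpl.
    apply Rmult_le_pos; [lra|apply Rmax_r]. }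
  destruct (Rlt_dec b r0) as [Hbr|Hbr].
  { assert (Sx : strict_level f 0 r0 x) by (split; rewrite Ex; simpl; lra).
    pose proof (H2 y x Hy Sx). rewrite Ex in H. exact H. }
  pose proof (H2 y xb Hy (conj (proj1 Hxb) (proj2 Hxb))) as Hb. fold a in Hb.
  pose proof (dist_shift X d (sublevel f y) x xb _ Hm Hb) as Hs.
  eapply Rbar_le_trans. exact Hs. simpl.
  rewrite (Rmax_left (b - y) 0) by lra.
  assert (Rmax (a - y) 0 <= delta) by (apply Rmax_lub; lra).
  assert (k * Rmax (a - y) 0 <= k * delta) by (apply Rmult_le_compat_l; lra).
  assert (k * (3 * delta) <= k * (b - y)) by (apply Rmult_le_compat_l; lra).
  assert (k * (3 * delta) = 3 * (k * delta)) by ring. assert (0 < k * delta) by nra. lra.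
Qed.

Theorem theorem2p2 (X : Type) (d : X -> X -> R) (f : X -> Rbar) (r0 k : R) :
  is_metric d -> complete_metric d -> proper_fun f -> lsc d f ->
  0 < r0 -> 0 < k ->
  ((metrically_regular_on d dR (epi_map f) k
       (fun x y => strict_level f 0 r0 x /\ 0 < y < r0))
   <->
   (forall r x, 0 < r < r0 -> strict_level f 0 r0 x ->
       Rbar_le (distS d x (sublevel f r)) (k * Rmax (real (f x) - r) 0)))
  /\
  ((forall r x, 0 < r < r0 -> strict_level f 0 r0 x ->
       Rbar_le (distS d x (sublevel f r)) (k * Rmax (real (f x) - r) 0))
   <->
   (forall x, strict_level f 0 r0 x -> Rbar_le (/ k) (strong_slope d f x))).
Proof.
  intros Hm Hc [Hf _] Hl Hr0 Hk. split; split; intros H.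
  - apply (iii_ii X d f r0 k Hm Hc Hf Hl Hk). apply (i_iii X d f r0 k Hm Hf Hk H).
  - apply (ii_i X d f r0 k Hm Hf Hk Hr0 H).
  - apply (ii_iii X d f r0 k Hm Hf Hk H).
  - apply (iii_ii X d f r0 k Hm Hc Hf Hl Hk H).
Qed.
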